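(* Let $\mathfrak g=\mathbb R f_1\ltimes_M\mathbb R^3$ be a 4-dimensional almost abelian Lie algebra, where $\mathbb R^3$ is an abelian ideal with basis $\{f_2,f_3,f_4\}$ and $M=\operatorname{ad}_{f_1}|_{\mathbb R^3}$ has matrix $\begin{pmatrix}\mu & w^{T}\\ 0 & A\end{pmatrix}$ with $\mu\in\mathbb R$, $w\in\mathbb R^2$, $A\in\mathfrak{gl}(2,\mathbb R)$. If $\operatorname{tr}(A)\neq 0$, then $\mathfrak g$ admits an LCS structure.
   Context: An LCS structure on a Lie algebra $\mathfrak g$ is a pair $(\omega,\theta)$ with $\omega\in\Lambda^2\mathfrak g^*$ non-degenerate and $\theta\in\mathfrak g^*$ closed and nonzero, such that $d\omega=\theta\wedge\omega$ ($d$ the Chevalley–Eilenberg differential). *)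

(* Defs.v *)
From HB Require Import structures.
From mathcomp Require Import all_boot all_order all_algebra.
Set Implicit Arguments. Unset Strict Implicit. Unset Printing Implicit Defensive.
Import Order.TTheory GRing.Theory Num.Theory.
Local Open Scope ring_scope.

(* Lie algebras on R^n = 'cV[R]_n given by a bracket [br].  Forms:
   a 2-form is represented by a skew-symmetric matrix Om, acting as
   om(x,y) = x^T Om y ; a 1-form by a row vector t, acting as t x. *)
Section LCS.
Variables (R : fieldType) (n : nat) (br : 'cV[R]_n -> 'cV[R]_n -> 'cV[R]_n).

Definition form2 (Om : 'M[R]_n) (x y : 'cV[R]_n) : R := (x^T *m Om *m y) 0 0.
Definition form1 (t : 'rV[R]_n) (x : 'cV[R]_n) : R := (t *m x) 0 0.

Definition CE_d1 (t : 'rV[R]_n) (x y : 'cV[R]_n) : R := - form1 t (br x y).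
Definition CE_d2 (Om : 'M[R]_n) (x y z : 'cV[R]_n) : R :=
  - form2 Om (br x y) z + form2 Om (br x z) y - form2 Om (br y z) x.
Definition wedge12 (t : 'rV[R]_n) (Om : 'M[R]_n) (x y z : 'cV[R]_n) : R :=
  form1 t x * form2 Om y z - form1 t y * form2 Om x z + form1 t z * form2 Om x y.

Definition is_LCS (Om : 'M[R]_n) (t : 'rV[R]_n) : Prop :=
  [/\ Om^T = - Om,
      (forall x, (forall y, form2 Om x y = 0) -> x = 0),
      (forall x y, CE_d1 t x y = 0),
      t != 0 &
      (forall x y z, CE_d2 Om x y z = wedge12 t Om x y z)].
End LCS.

(* The almost abelian Lie algebra R f1 |x_M R^3, in coordinates w.r.t. the
   basis (f1, f2, f3, f4) (index 0 = f1).  M = ad_{f1}|_{R^3} in the basis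
   (f2,f3,f4), with the usual column convention [f1, f_j] = sum_i M_ij f_i. *)
Definition almost_abelian_M (R : fieldType) (mu : R) (w : 'cV[R]_2) (A : 'M[R]_2)
  : 'M[R]_(1 + 2) := block_mx (mu%:M : 'M_1) w^T 0 A.

Definition almost_abelian_br (R : fieldType) (M : 'M[R]_(1 + 2))
  (x y : 'cV[R]_(1 + (1 + 2))) : 'cV[R]_(1 + (1 + 2)) :=
  let N : 'M[R]_(1 + (1 + 2)) := block_mx (0 : 'M_1) 0 0 M in
  x 0 0 *: (N *m y) - y 0 0 *: (N *m x).

(* Main.v *)
Require Import Defs.
From HB Require Import structures.
From mathcomp Require Import all_boot all_order all_algebra.
From mathcomp Require Import ring.
Import Order.TTheory GRing.Theory Num.Theory.
Local Open Scope ring_scope.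
Definition i0 : 'I_(1+(1+2)) := @Ordinal 4 0 isT.
Definition i1 : 'I_(1+(1+2)) := @Ordinal 4 1 isT.
Definition i2 : 'I_(1+(1+2)) := @Ordinal 4 2 isT.
Definition i3 : 'I_(1+(1+2)) := @Ordinal 4 3 isT.
Definition k0 : 'I_(1+2) := @Ordinal 3 0 isT.
Definition k1 : 'I_(1+2) := @Ordinal 3 1 isT.
Definition k2 : 'I_(1+2) := @Ordinal 3 2 isT.
Definition j0 : 'I_2 := @Ordinal 2 0 isT.
Definition j1 : 'I_2 := @Ordinal 2 1 isT.
Definition z0 : 'I_1 := @Ordinal 1 0 isT.
Lemma sp_i0 : split i0 = inl z0. Proof. by rewrite -(unsplitK (inl z0 : 'I_1 + 'I_(1+2))); congr split; apply/val_inj. Qed.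
Lemma sp_i1 : split i1 = inr k0. Proof. by rewrite -(unsplitK (inr k0 : 'I_1 + 'I_(1+2))); congr split; apply/val_inj. Qed.
Lemma sp_i2 : split i2 = inr k1. Proof. by rewrite -(unsplitK (inr k1 : 'I_1 + 'I_(1+2))); congr split; apply/val_inj. Qed.
Lemma sp_i3 : split i3 = inr k2. Proof. by rewrite -(unsplitK (inr k2 : 'I_1 + 'I_(1+2))); congr split; apply/val_inj. Qed.
Lemma sp_k0 : split k0 = inl z0. Proof. by rewrite -(unsplitK (inl z0 : 'I_1 + 'I_2)); congr split; apply/val_inj. Qed.
Lemma sp_k1 : split k1 = inr j0. Proof. by rewrite -(unsplitK (inr j0 : 'I_1 + 'I_2)); congr split; apply/val_inj. Qed.
Lemma sp_k2 : split k2 = inr j1. Proof. by rewrite -(unsplitK (inr j1 : 'I_1 + 'I_2)); congr split; apply/val_inj. Qed.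
Lemma sum4 (R : nmodType) (F : 'I_(1+(1+2)) -> R) : \sum_i F i = F i0 + F i1 + F i2 + F i3.
Proof. rewrite !big_ord_recl big_ord0 addr0 !addrA. by congr (F _ + F _ + F _ + F _); apply/val_inj. Qed.
Lemma z0E (i : 'I_1) : i = z0. Proof. by apply/val_inj; case: i => [[]]. Qed.
Lemma ordE (i : 'I_(1+(1+2))) : [\/ i = i0, i = i1, i = i2 | i = i3].
Proof.
case: i => [[|[|[|[|m]]]] Hi].
- by constructor 1; apply/val_inj.
- by constructor 2; apply/val_inj.
- by constructor 3; apply/val_inj.
- by constructor 4; apply/val_inj.
- by [].
Qed.

Definition Nmat {R : realFieldType} (mu : R) (w : 'cV[R]_2) (A : 'M[R]_2) : 'M[R]_(1 + (1 + 2)) :=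
  block_mx (0 : 'M_1) 0 0 (almost_abelian_M mu w A).

Lemma Ny {R : realFieldType} (mu : R) (w : 'cV[R]_2) (A : 'M[R]_2) (y : 'cV[R]_(1+(1+2))) :
  [/\ (Nmat mu w A *m y) i0 z0 = 0,
      (Nmat mu w A *m y) i1 z0 = mu * y i1 z0 + w j0 z0 * y i2 z0 + w j1 z0 * y i3 z0,
      (Nmat mu w A *m y) i2 z0 = A j0 j0 * y i2 z0 + A j0 j1 * y i3 z0 &
      (Nmat mu w A *m y) i3 z0 = A j1 j0 * y i2 z0 + A j1 j1 * y i3 z0].
Proof.
rewrite !mxE !sum4 /Nmat /almost_abelian_M.
do 6 rewrite ?mxE ?sp_i0 ?sp_i1 ?sp_i2 ?sp_i3 ?sp_k0 ?sp_k1 ?sp_k2 /=.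
rewrite ?(z0E 0).
by split; rewrite !mul0r ?add0r ?mulr1n.
Qed.

Lemma brE {R : realFieldType} (mu : R) (w : 'cV[R]_2) (A : 'M[R]_2) x y i :
  almost_abelian_br (almost_abelian_M mu w A) x y i z0 =
  x i0 z0 * (Nmat mu w A *m y) i z0 - y i0 z0 * (Nmat mu w A *m x) i z0.
Proof.
have e : (0 : 'I_(1+(1+2))) = i0 by apply/val_inj.
by rewrite /almost_abelian_br !mxE ?(z0E 0) e. Qed.

Definition Om0 (R : ringType) : 'M[R]_(1 + (1 + 2)) :=
  \matrix_(i, j) (if (val i == 0%N) && (val j == 1%N) then 1
                  else if (val i == 1%N) && (val j == 0%N) then -1
                  else if (val i == 2%N) && (val j == 3%N) then 1
                  else if (val i == 3%N) && (val j == 2%N) then -1 else 0).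
Definition t0 {R : ringType} (c : R) : 'rV[R]_(1 + (1 + 2)) :=
  \row_j (if val j == 0%N then c else 0).

Lemma form2E (R : realFieldType) (x y : 'cV[R]_(1+(1+2))) :
  form2 (Om0 R) x y = x i0 z0 * y i1 z0 - x i1 z0 * y i0 z0 + x i2 z0 * y i3 z0 - x i3 z0 * y i2 z0.
Proof.
rewrite /form2 !mxE !sum4 !mxE !sum4 !mxE /= ?(z0E 0).
rewrite !mulr0 !mulr1 !mulrN1 !add0r !addr0; ring.
Qed.

Lemma form1E (R : realFieldType) c (x : 'cV[R]_(1+(1+2))) :
  form1 (t0 c) x = c * x i0 z0.
Proof.
rewrite /form1 !mxE !sum4 !mxE /= ?(z0E 0).
rewrite !mul0r !addr0; ring.
Qed.

Theorem lemma4p4 (R : realFieldType) (mu : R) (w : 'cV[R]_2) (A : 'M[R]_2) :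
  \tr A != 0 ->
  exists (Om : 'M[R]_(1 + (1 + 2))) (t : 'rV[R]_(1 + (1 + 2))),
    is_LCS (almost_abelian_br (almost_abelian_M mu w A)) Om t.
Proof.
move=> trA.
have trE : \tr A = A j0 j0 + A j1 j1.
  rewrite /mxtrace !big_ord_recl big_ord0 addr0.
  by congr (A _ _ + A _ _); apply/val_inj.
exists (Om0 R), (t0 (- \tr A)); split.
- apply/matrixP => i j; rewrite !mxE.
  by case: (ordE i) => ->; case: (ordE j) => -> /=; rewrite ?oppr0 ?opprK.
- move=> x H.
  have e k : x k z0 = 0.
    pose d := fun l : 'I_(1+(1+2)) => (delta_mx l z0 : 'cV[R]_(1+(1+2))).
    have := H (d i0); have := H (d i1); have := H (d i2); have := H (d i3).
    rewrite !form2E /d !mxE /=.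
    rewrite !mulr0 !mulr1 !subr0 !add0r ?addr0 ?sub0r => h3 h2 h1 h0.
    case: (ordE k) => ->.
    + by [].
    + by move/eqP: h0; rewrite oppr_eq0 => /eqP.
    + by [].
    + by move/eqP: h2; rewrite oppr_eq0 => /eqP.
  by apply/matrixP => k l; rewrite (z0E l) e mxE.
- move=> x y; rewrite /CE_d1 form1E brE.
  by have [-> _ _ _] := Ny mu w A y; have [-> _ _ _] := Ny mu w A x; rewrite !mulr0 subr0 mulr0 oppr0.
- apply/negP => /eqP/matrixP/(_ z0 i0); rewrite !mxE /= => /eqP.
  by rewrite oppr_eq0 (negbTE trA).
- move=> x y z; rewrite /CE_d2 /wedge12 !form2E !form1E !brE.
  have [x0 x1 x2 x3] := Ny mu w A x.
  have [y0 y1 y2 y3] := Ny mu w A y.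
  have [u0 u1 u2 u3] := Ny mu w A z.
  rewrite x0 x1 x2 x3 y0 y1 y2 y3 u0 u1 u2 u3 trE; ring.
Qed.
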